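(* Let $Q$ be a good dyadic square or a dyadic segment. Then each of the circular arcs bounding $\widehat{\langle Q\rangle}=\Sigma^{-1}(\langle Q\rangle)\subset S^2$ lies on a circle of (Euclidean) diameter at least $1$. (When $Q$ is a dyadic segment, $\widehat{\langle Q\rangle}$ is itself such an arc.)
   Context: $\Sigma(x,y,z)=(x/(1-z),y/(1-z))$ is stereographic projection from $(0,0,1)$ onto $\mathbb{R}^2$. Dyadic segments: segments of the $x$-axis of $\mathbb{R}^2$ obtained from $[0,4]\times\{0\}$ by repeated bisection (including itself). Dyadic squares: obtained from $[-2,2]^2$ by repeatedly cutting into four congruent quarters; a dyadic square is good if it is contained in $[-3/2,3/2]^2$ and has side length at most $1/2$. $\langle Q\rangle$ denotes the solid segment or square. *)

(* Defs.v *)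
From Stdlib Require Import Reals List.
Open Scope R_scope.

Definition pt2 : Type := (R * R)%type.
Definition pt3 : Type := (R * R * R)%type.

Definition Sigma (p : pt3) : pt2 :=
  let '(x, y, z) := p in (x / (1 - z), y / (1 - z)).

Definition north : pt3 := (0, 0, 1).

Definition on_S2 (p : pt3) : Prop :=
  let '(x, y, z) := p in x * x + y * y + z * z = 1.

Definition hat (A : pt2 -> Prop) : pt3 -> Prop :=
  fun p => on_S2 p /\ p <> north /\ A (Sigma p).

Definition hseg (a b y0 : R) : pt2 -> Prop :=
  fun q => a <= fst q <= b /\ snd q = y0.
Definition vseg (x0 c d : R) : pt2 -> Prop :=
  fun q => fst q = x0 /\ c <= snd q <= d.

Definition dyadic_segment (a b : R) : Prop :=
  exists n k : nat, (k < 2 ^ n)%nat /\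
    a = 4 * INR k / 2 ^ n /\ b = 4 * INR (S k) / 2 ^ n.

Definition dyadic_square (a b s : R) : Prop :=
  exists n i j : nat, (i < 2 ^ n)%nat /\ (j < 2 ^ n)%nat /\
    s = 4 / 2 ^ n /\ a = -2 + INR i * s /\ b = -2 + INR j * s.

Definition good_square (a b s : R) : Prop :=
  dyadic_square a b s /\
  -3/2 <= a /\ a + s <= 3/2 /\ -3/2 <= b /\ b + s <= 3/2 /\ s <= 1/2.

Definition solid_square (a b s : R) : pt2 -> Prop :=
  fun q => a <= fst q <= a + s /\ b <= snd q <= b + s.

Definition square_sides (a b s : R) : list (pt2 -> Prop) :=
  hseg a (a + s) b :: hseg a (a + s) (b + s) ::
  vseg a b (b + s) :: vseg (a + s) b (b + s) :: nil.

Definition sub3 (p q : pt3) : pt3 :=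
  let '(x1, y1, z1) := p in let '(x2, y2, z2) := q in (x1 - x2, y1 - y2, z1 - z2).
Definition dot3 (p q : pt3) : R :=
  let '(x1, y1, z1) := p in let '(x2, y2, z2) := q in x1 * x2 + y1 * y2 + z1 * z2.

Definition circle (c nv : pt3) (r : R) : pt3 -> Prop :=
  fun x => dot3 (sub3 x c) (sub3 x c) = r * r /\ dot3 (sub3 x c) nv = 0.

Definition lies_on_circle_diam_ge1 (A : pt3 -> Prop) : Prop :=
  exists (c nv : pt3) (r : R), nv <> (0, 0, 0) /\ 0 < r /\ 1 <= 2 * r /\
    (forall x, A x -> circle c nv r x).

(* Main.v *)
Require Import Defs.
From Stdlib Require Import Reals List Lra.
Open Scope R_scope.

Lemma z_ne1 (x y z : R) : x*x+y*y+z*z = 1 -> (x,y,z) <> north -> 1 - z <> 0.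
Proof.
  intros H Hn Hz. apply Hn. unfold north.
  assert (z = 1) by lra. subst z.
  assert (x*x = 0 /\ y*y = 0) as [h1 h2] by (split; nra).
  apply Rmult_integral in h1; apply Rmult_integral in h2.
  destruct h1, h2; subst; reflexivity.
Qed.

Lemma rad_ok (t : R) : -3/2 <= t <= 3/2 ->
  0 < sqrt (1/(1+t*t)) /\ 1 <= 2 * sqrt (1/(1+t*t)).
Proof.
  intros Ht. assert (Hp : 0 < 1 + t*t) by nra.
  split. apply sqrt_lt_R0. apply Rdiv_lt_0_compat; lra.
  assert (1/2 <= sqrt (1/(1+t*t))); [|lra].
  rewrite <- (sqrt_square (1/2)) by lra.
  apply sqrt_le_1_alt.
  apply Rmult_le_reg_r with (1+t*t); auto.
  replace (1 / (1 + t * t) * (1 + t * t)) with 1 by (field; lra). nra.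
Qed.

Lemma hline (a b y0 : R) : -3/2 <= y0 <= 3/2 ->
  lies_on_circle_diam_ge1 (hat (hseg a b y0)).
Proof.
  intros Hy. destruct (rad_ok y0 Hy) as [H1 H2].
  assert (Hp : 0 < 1 + y0*y0) by nra.
  exists (0, y0/(1+y0*y0), y0*y0/(1+y0*y0)), (0,1,y0), (sqrt (1/(1+y0*y0))).
  split; [intro E; inversion E; lra|]. split; [lra|]. split; [lra|].
  intros [[x y] z] [HS [Hn [_ Hq]]]. simpl in HS, Hq.
  pose proof (z_ne1 x y z HS Hn) as Hz.
  assert (Hyy : y = y0 * (1 - z)) by (rewrite <- Hq; field; auto).
  unfold circle; simpl. rewrite sqrt_sqrt by (apply Rlt_le, Rdiv_lt_0_compat; lra).
  split.
  - replace ((x-0)*(x-0)) with (1 - y*y - z*z) by (rewrite Rminus_0_r; lra).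
    subst y. field. lra.
  - subst y. field. lra.
Qed.

Lemma vline (x0 c d : R) : -3/2 <= x0 <= 3/2 ->
  lies_on_circle_diam_ge1 (hat (vseg x0 c d)).
Proof.
  intros Hy. destruct (rad_ok x0 Hy) as [H1 H2].
  assert (Hp : 0 < 1 + x0*x0) by nra.
  exists (x0/(1+x0*x0), 0, x0*x0/(1+x0*x0)), (1,0,x0), (sqrt (1/(1+x0*x0))).
  split; [intro E; inversion E; lra|]. split; [lra|]. split; [lra|].
  intros [[x y] z] [HS [Hn [Hq _]]]. simpl in HS, Hq.
  pose proof (z_ne1 x y z HS Hn) as Hz.
  assert (Hyy : x = x0 * (1 - z)) by (rewrite <- Hq; field; auto).
  unfold circle; simpl. rewrite sqrt_sqrt by (apply Rlt_le, Rdiv_lt_0_compat; lra).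
  split.
  - replace ((y-0)*(y-0)) with (1 - x*x - z*z) by (rewrite Rminus_0_r; lra).
    subst x. field. lra.
  - subst x. field. lra.
Qed.

Theorem lemma3p1 :
  (forall a b : R, dyadic_segment a b ->
     lies_on_circle_diam_ge1 (hat (hseg a b 0))) /\
  (forall a b s : R, good_square a b s ->
     forall e, In e (square_sides a b s) ->
       lies_on_circle_diam_ge1 (hat e)).
Proof.
  split.
  - intros a b _. apply hline. lra.
  - intros a b s [[n [i [j [_ [_ [Hs _]]]]]] [? [? [? [? ?]]]]] e He.
    assert (0 < s) by (rewrite Hs; apply Rdiv_lt_0_compat; [lra| apply pow_lt; lra]).
    simpl in He.
    destruct He as [<-|[<-|[<-|[<-|[]]]]].
    + apply hline; lra.
    + apply hline; lra.
    + apply vline; lra.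
    + apply vline; lra.
Qed.
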